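(* Let $m\ge 2$, $\epsilon>0$, and $\varphi_j=2^{-j}$ for $j\ge 0$. For $j=1,\dots,m$ let $\beta_j,\beta_j':[0,1]\to\mathbb{R}$ be functions such that for all $x\in[0,1]$: $\beta_j(x)^2+\beta_j'(x)^2=1$; if $0\le x\le\varphi_j$ then $\beta_j(x)^2\le\epsilon^2$; and if $2\varphi_j\le x\le 1$ then $\beta_j(x)^2\ge 1-\epsilon^2$. Define $B_j'(x)=\prod_{i=1}^{j}\beta_i'(x)$ (with $B_0'\equiv 1$) and $B_j(x)=B_{j-1}'(x)\beta_j(x)$. Then for every $j$ with $1\le j\le m-1$ and every $x\in[\varphi_j,\varphi_{j-1})$, $$B_j(x)^2+B_{j+1}(x)^2\ge 1-\mathcal{O}(j\epsilon^2).$$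
   Context: $\mathcal{O}(\cdot)$ hides an absolute constant. *)

(* Defs.v *)
From Stdlib Require Import Reals Lra Lia.
Open Scope R_scope.

Definition phi (j : nat) : R := / (2 ^ j).

Fixpoint Bprime (bp : nat -> R -> R) (j : nat) (x : R) : R :=
  match j with
  | O => 1
  | S k => Bprime bp k x * bp (S k) x
  end.

(* B_j(x) = B'_{j-1}(x) * beta_j(x)  (used for j >= 1) *)
Definition Bfun (b bp : nat -> R -> R) (j : nat) (x : R) : R :=
  Bprime bp (j - 1) x * b j x.

(* Main.v *)
Require Import Defs.
From Stdlib Require Import Reals Lra Lia.
Open Scope R_scope.

Lemma phi_pos j : 0 < phi j.
Proof. unfold phi. apply Rinv_0_lt_compat, pow_lt; lra. Qed.

Lemma phi_anti i j : (i <= j)%nat -> phi j <= phi i.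
Proof.
  intros H. unfold phi. apply Rinv_le_contravar. apply pow_lt; lra.
  apply Rle_pow; lra || lia.
Qed.

Lemma phi_le1 j : phi j <= 1.
Proof. replace 1 with (phi 0) by (unfold phi; simpl; lra). apply phi_anti; lia. Qed.

Lemma Bprime_bound (bp : nat -> R -> R) (x e : R) (k : nat) :
  0 <= e ->
  (forall i, (1 <= i <= k)%nat -> 1 - e <= bp i x ^ 2 <= 1) ->
  1 - INR k * e <= Bprime bp k x ^ 2 <= 1.
Proof.
  intros He. induction k as [|k IH]; intros H.
  - simpl. lra.
  - assert (IH' := IH (fun i Hi => H i ltac:(lia))).
    assert (Hk := H (S k) ltac:(lia)).
    simpl Bprime. rewrite S_INR.
    replace ((Bprime bp k x * bp (S k) x) ^ 2) with
      (Bprime bp k x ^ 2 * bp (S k) x ^ 2) by ring.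
    set (P := Bprime bp k x ^ 2) in *. set (Q := bp (S k) x ^ 2) in *.
    assert (0 <= P) by (unfold P; apply pow2_ge_0).
    assert (0 <= (1 - P) * (1 - Q)) by (apply Rmult_le_pos; lra).
    split; nra.
Qed.

Theorem lemma8 :
  exists C : R,
  forall (m : nat) (eps : R) (b bp : nat -> R -> R),
    (2 <= m)%nat -> 0 < eps ->
    (forall (j : nat) (x : R), (1 <= j <= m)%nat -> 0 <= x <= 1 ->
        b j x ^ 2 + bp j x ^ 2 = 1 /\
        (x <= phi j -> b j x ^ 2 <= eps ^ 2) /\
        (2 * phi j <= x -> b j x ^ 2 >= 1 - eps ^ 2)) ->
    forall (j : nat) (x : R), (1 <= j <= m - 1)%nat ->
      phi j <= x < phi (j - 1) ->
      Bfun b bp j x ^ 2 + Bfun b bp (j + 1) x ^ 2 >= 1 - C * INR j * eps ^ 2.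
Proof.
  exists 1. intros m eps b bp Hm He H j x Hj Hx.
  assert (Hx01 : 0 <= x <= 1).
  { pose proof (phi_pos j). pose proof (phi_le1 (j - 1)). lra. }
  assert (HB := Bprime_bound bp x (eps ^ 2) (j - 1) ltac:(nra)).
  destruct HB as [HB1 HB2].
  { intros i Hi. destruct (H i x ltac:(lia) Hx01) as [E [L _]].
    assert (x <= phi i). { pose proof (phi_anti i (j - 1) ltac:(lia)). lra. }
    specialize (L H0). pose proof (pow2_ge_0 (b i x)). lra. }
  destruct (H j x ltac:(lia) Hx01) as [Ej _].
  destruct (H (j + 1)%nat x ltac:(lia) Hx01) as [Ej1 [_ Gj1]].
  assert (Hc : b (j + 1)%nat x ^ 2 >= 1 - eps ^ 2).
  { apply Gj1. unfold phi in *. rewrite pow_add.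
    replace (2 * / (2 ^ j * 2 ^ 1)) with (/ 2 ^ j).
    lra. field. apply pow_nonzero; lra. }
  unfold Bfun.
  replace (j + 1 - 1)%nat with (S (j - 1)) by lia.
  replace (S (j - 1)) with j at 2 by lia.
  simpl Bprime. replace (S (j - 1)) with j by lia.
  assert (Hjr : INR j = INR (j - 1) + 1).
  { replace j with (S (j - 1)) at 1 by lia. apply S_INR. }
  rewrite Hjr.
  set (P := Bprime bp (j - 1) x) in *.
  set (a := b j x) in *. set (a' := bp j x) in *.
  set (c := b (j + 1)%nat x) in *. set (c' := bp (j + 1)%nat x) in *.
  replace ((P * a) ^ 2 + (P * a' * c) ^ 2) with
    (P ^ 2 * (a ^ 2 + a' ^ 2 * c ^ 2)) by ring.
  set (I := a ^ 2 + a' ^ 2 * c ^ 2).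
  assert (0 <= a' ^ 2) by apply pow2_ge_0.
  assert (0 <= c' ^ 2) by apply pow2_ge_0.
  assert (0 <= eps ^ 2) by apply pow2_ge_0.
  assert (HI1 : I <= 1) by (unfold I; nra).
  assert (HI2 : I >= 1 - eps ^ 2) by (unfold I; nra).
  assert (0 <= (1 - P ^ 2) * (1 - I)) by (apply Rmult_le_pos; lra).
  nra.
Qed.
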